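(* Let $P,Q\in\mathbb{H}[q_1,q_2]$ and $a,b\in\mathbb{H}$. (1) If $P=(q_1-a)*P_1$ and $Q=(q_1-a)*Q_1$ for some $P_1,Q_1\in\mathbb{H}[q_1,q_2]$, then ${\rm Res}(P,Q;q_1)\equiv0$. (2) If $P=(q_2-b)*P_2$ and $Q=(q_2-b)*Q_2$ for some $P_2,Q_2\in\mathbb{H}[q_1,q_2]$, then ${\rm Res}(P,Q;q_2)\equiv0$.
   Context: $\mathbb{H}$ denotes the quaternions. A slice regular polynomial in two quaternionic variables is a function $\mathbb{H}^2\to\mathbb{H}$ of the form $P(q_1,q_2)=\sum_{n=0}^{N}\sum_{m=0}^{M}q_1^nq_2^ma_{n,m}$ with $a_{n,m}\in\mathbb{H}$ (coefficients on the right); $\deg_{q_1}P$, $\deg_{q_2}P$ are the degrees in $q_1$, $q_2$. The set of these is $\mathbb{H}[q_1,q_2]$, and $\mathbb{H}[q]$ denotes the analogous one-variable polynomials $\sum q^na_n$. The $*$-product is defined by $\big(\sum q_1^nq_2^ma_{n,m}\big)*\big(\sum q_1^nq_2^mb_{n,m}\big)=\sum_{n,m}q_1^nq_2^m\sum_{r\le n,s\le m}a_{r,s}b_{n-r,m-s}$ (and analogously in one variable); $(\mathbb{H}[q],+,* )$ is a left and right Ore domain and we let $\mathcal{L}$ be its skew field of quotients. Every $P\in\mathbb{H}[q_1,q_2]$ can be written as $P=\sum_{k=0}^{n}q_1^kP_k(q_2)$ with $P_k\in\mathbb{H}[q_2]$, and as $P=\sum_{k=0}^{r}q_2^k*\tilde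 P_k(q_1)$ with $\tilde P_k\in\mathbb{H}[q_1]$. Dieudonné determinant: for a skew field $(\mathbb F,+,\star)$, let $\overline{\mathbb F}^\star$ be the abelianization of its multiplicative group; ${\rm Det}^\star_N$ is the unique homomorphism $GL(N,\mathbb F)\to\overline{\mathbb F}^\star$ sending ${\rm diag}(\lambda_1,\dots,\lambda_N)$ to the class of $\lambda_1\star\cdots\star\lambda_N$, extended by the value $[0]$ on non-invertible matrices. Here ${\rm Det}^*_N$ is this determinant over $\mathcal L$; for a matrix with entries in $\mathbb{H}[q]$ its value has a slice regular polynomial representative, unique up to commutators, with which it is identified. Regular resultants: let $P=\sum_{k=0}^nq_1^kP_k(q_2)$, $Q=\sum_{k=0}^mq_1^kQ_k(q_2)$. The Sylvester matrix $A(q_2)$ is the $(n+m)\times(n+m)$ matrix whose $j$-th column ($1\le j\le m$) has entries $P_0,\dots,P_n$ in rows $j,\dots,j+n$ and zeros elsewhere, and whose $(m+j)$-th column ($1\le j\le n$) has entries $Q_0,\dots,Q_m$ in rows $j,\dots,j+m$ and zeros elsewhere; ${\rm Res}(P,Q;q_1):={\rm Det}^*_{n+m}(A(q_2))$. Likewise, with $P=\sum_{k=0}^rq_2^k*\tilde P_k(q_1)$, $Q=\sum_{k=0}^sq_2^k*\tilde Q_k(q_1)$, $B(q_1)$ is the $(r+s)\times(r+s)$ matrix built in the same way from $\tilde P_0,\dots,\tilde P_r$ (first $s$ columns) and $\tilde Q_0,\dots,\tilde Q_s$ (last $r$ columns), and ${\rm Res}(P,Q;q_2):={\rm Det}^*_{r+s}(B(q_1))$.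 ''${\rm Res}\equiv0$'' means it is the zero polynomial (zero class). *)

(* Defs.v *)
From HB Require Import structures.
From mathcomp Require Import all_boot all_order all_algebra.
From mathcomp Require Import ring.
From mathcomp Require Import reals.
Set Implicit Arguments. Unset Strict Implicit. Unset Printing Implicit Defensive.
Import Order.TTheory GRing.Theory Num.Theory.
Local Open Scope ring_scope.

Record quat (R : Type) := Quat { qr : R; qi : R; qj : R; qk : R }.

Section Quaternions.
Variable R : comNzRingType.

Definition quat_tuple (x : quat R) := (qr x, qi x, qj x, qk x).
Definition tuple_quat (t : R * R * R * R) := let: (a, b, c, d) := t in Quat a b c d.
Lemma quat_tupleK : cancel quat_tuple tuple_quat. Proof. by case. Qed.

HB.instance Definition _ := Choice.copy (quat R) (can_type quat_tupleK).

Definition qzero := Quat (0 : R) 0 0 0.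
Definition qone := Quat (1 : R) 0 0 0.
Definition qopp (x : quat R) := Quat (- qr x) (- qi x) (- qj x) (- qk x).
Definition qadd (x y : quat R) :=
  Quat (qr x + qr y) (qi x + qi y) (qj x + qj y) (qk x + qk y).
Definition qmul (x y : quat R) :=
  let: Quat a0 a1 a2 a3 := x in let: Quat b0 b1 b2 b3 := y in
  Quat (a0 * b0 - a1 * b1 - a2 * b2 - a3 * b3)
       (a0 * b1 + a1 * b0 + a2 * b3 - a3 * b2)
       (a0 * b2 - a1 * b3 + a2 * b0 + a3 * b1)
       (a0 * b3 + a1 * b2 - a2 * b1 + a3 * b0).

Lemma qaddA : associative qadd.
Proof. by case=> ????; case=> ????; case=> ????; rewrite /qadd /=; congr Quat; ring. Qed.
Lemma qaddC : commutative qadd.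
Proof. by case=> ????; case=> ????; rewrite /qadd /=; congr Quat; ring. Qed.
Lemma qadd0 : left_id qzero qadd.
Proof. by case=> ????; rewrite /qadd /=; congr Quat; ring. Qed.
Lemma qaddN : left_inverse qzero qopp qadd.
Proof. by case=> ????; rewrite /qadd /=; congr Quat; ring. Qed.

HB.instance Definition _ := GRing.isZmodule.Build (quat R) qaddA qaddC qadd0 qaddN.

Lemma qmulA : associative qmul.
Proof. by case=> ????; case=> ????; case=> ????; rewrite /qmul /=; congr Quat; ring. Qed.
Lemma qmul1 : left_id qone qmul.
Proof. by case=> ????; rewrite /qmul /=; congr Quat; ring. Qed.
Lemma qmulr1 : right_id qone qmul.
Proof. by case=> ????; rewrite /qmul /=; congr Quat; ring. Qed.
Lemma qmulDl : left_distributive qmul qadd.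
Proof. by case=> ????; case=> ????; case=> ????; rewrite /qmul /qadd /=; congr Quat; ring. Qed.
Lemma qmulDr : right_distributive qmul qadd.
Proof. by case=> ????; case=> ????; case=> ????; rewrite /qmul /qadd /=; congr Quat; ring. Qed.
Lemma qone_neq0 : qone != 0 :> quat R.
Proof.
apply/eqP => /(congr1 (@qr R)) /=. rewrite /GRing.zero /=. by move/eqP; rewrite oner_eq0.
Qed.

HB.instance Definition _ :=
  GRing.Zmodule_isNzRing.Build (quat R) qmulA qmul1 qmulr1 qmulDl qmulDr qone_neq0.

End Quaternions.

Notation H R := (quat (R : realType)).

(*  H[q]      := {poly H}  (ring product of {poly _} = the *-product)  *)
(*  H[q1,q2]  := {poly {poly H}} : P = \sum_k q1^k P_k(q2), where the  *)
(*  outer variable is q1 and P_k = P`_k \in H[q2].  The ring product of *)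
(*  {poly {poly H}} is exactly the two-variable *-product.            *)
(*  swapXY P is the rewriting P = \sum_k q2^k * tilde P_k(q1), i.e.    *)
(*  (swapXY P)`_k = tilde P_k.                                         *)

(* Sylvester matrix of p = \sum_{k<=n} X^k p_k, q = \sum_{k<=m} X^k q_k,
   n = deg p, m = deg q (size = deg + 1); 0-indexed version of the paper's:
   column c < m holds p_0..p_n in rows c..c+n; column m + c' (c' < n)
   holds q_0..q_m in rows c'..c'+m. *)
Definition sylvester (A : nzRingType) (p q : {poly A}) :
    'M[A]_((size p).-1 + (size q).-1) :=
  let m := (size q).-1 in
  \matrix_(i, j)
    if (j < m)%N then (if (j <= i)%N then p`_(i - j) else 0)
    else (if (j - m <= i)%N then q`_(i - (j - m)) else 0).

Definition skew_field_of_quotients (A : nzRingType) (L : unitRingType)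
    (phi : {rmorphism {poly A} -> L}) : Prop :=
  [/\ injective phi,
      (forall x : L, x != 0 -> x \is a GRing.unit),
      (forall x : L, exists a b, b != 0 /\ x = phi a * (phi b)^-1) &
      (forall x : L, exists a b, b != 0 /\ x = (phi b)^-1 * phi a)].

(* Det^*_N(M) is, by definition, the class [0] exactly when M is not in
   GL(N, L); otherwise it lies in the abelianized unit group.  So
   "Det^*_N(M) == 0" means: M (viewed over L) is not invertible. *)
Definition DetStar_eq0 (A : nzRingType) (L : unitRingType)
    (phi : {rmorphism {poly A} -> L}) (N : nat) (M : 'M[{poly A}]_N) : Prop :=
  ~ exists B : 'M[L]_N, map_mx phi M *m B = 1%:M /\ B *m map_mx phi M = 1%:M.

Definition Res_q1_eq0 (A : nzRingType) (L : unitRingType)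
    (phi : {rmorphism {poly A} -> L}) (P Q : {poly {poly A}}) : Prop :=
  DetStar_eq0 phi (sylvester P Q).
Definition Res_q2_eq0 (A : nzRingType) (L : unitRingType)
    (phi : {rmorphism {poly A} -> L}) (P Q : {poly {poly A}}) : Prop :=
  DetStar_eq0 phi (sylvester (swapXY P) (swapXY Q)).

Definition q1_minus (A : nzRingType) (a : A) : {poly {poly A}} := 'X - (a%:P)%:P.
Definition q2_minus (A : nzRingType) (b : A) : {poly {poly A}} := ('X - b%:P)%:P.

(* Main.v *)
Require Import Defs.
From HB Require Import structures.
From mathcomp Require Import all_boot all_order all_algebra.
From mathcomp Require Import reals zify.
Import GRing.Theory.
Local Open Scope ring_scope.

Section Aux.
Variable A : nzRingType.
Variable c : A.

Lemma tele (G : {poly A}) N :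
  \sum_(i < N.+1) c ^+ i * ((('X - c%:P) * G)`_i) = - (c ^+ N.+1 * G`_N).
Proof.
elim: N => [|N IH].
  by rewrite big_ord_recr big_ord0 /= add0r mulrBl coefB coefXM coefCM /= mul1r sub0r expr1.
rewrite big_ord_recr /= IH mulrBl coefB coefXM coefCM /= mulrBr mulrA -exprSr.
by rewrite addrA addNr sub0r.
Qed.

Lemma size_fac (G : {poly A}) : (size G <= (size (('X - c%:P) * G)%R).-1)%N.
Proof.
have [->|nz] := eqVneq G 0; first by rewrite size_poly0.
by rewrite size_monicM ?monicXsubC // size_XsubC.
Qed.

Lemma tele0 (G : {poly A}) j N : (size G + j < N)%N ->
  \sum_(i < N) c ^+ i * (('X^j * (('X - c%:P) * G))`_i) = 0.
Proof.
case: N => [//|N] hs.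
have -> : 'X^j * (('X - c%:P) * G) = ('X - c%:P) * ('X^j * G).
  by rewrite !mulrA (commr_polyXn ('X - c%:P) j).
rewrite tele nth_default ?mulr0 ?oppr0 //.
apply: leq_trans (size_polyMleq _ _) _.
rewrite size_polyXn /=; move: hs; rewrite ltnS addnC //.
Qed.

Lemma syl_null (G G' : {poly A}) :
  (\row_(i < (size (('X - c%:P) * G)).-1 + (size (('X - c%:P) * G')).-1) c ^+ i)
    *m sylvester (('X - c%:P) * G) (('X - c%:P) * G') = 0.
Proof.
have hG := size_fac G; have hG' := size_fac G'.
move: hG hG'.
set P := ('X - c%:P) * G; set Q := ('X - c%:P) * G' => hG hG'.
apply/rowP => j; rewrite !mxE.
case hj : (j < (size Q).-1)%N.
  transitivity (\sum_(i < (size P).-1 + (size Q).-1) c ^+ i * ('X^j * P)`_i).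
    by apply: eq_bigr => i _; rewrite !mxE hj coefXnM ltnNge; case: ifP.
  apply: tele0; have := ltn_ord j; move: hj hG; lia.
transitivity (\sum_(i < (size P).-1 + (size Q).-1) c ^+ i * ('X^(j - (size Q).-1) * Q)`_i).
  by apply: eq_bigr => i _; rewrite !mxE hj coefXnM ltnNge; case: ifP.
apply: tele0; have := ltn_ord j; move: hj hG'; lia.
Qed.

End Aux.

Lemma not_inv (A : nzRingType) (L : unitRingType)
    (phi : {rmorphism {poly A} -> L}) N (M : 'M[{poly A}]_N) (v : 'rV_N) (i : 'I_N) :
  v *m M = 0 -> v 0 i = 1 -> DetStar_eq0 phi M.
Proof.
move=> hv hi [B [h1 _]].
have h0 : map_mx phi v *m map_mx phi M = 0 by rewrite -map_mxM hv map_mx0.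
have : map_mx phi v = 0.
  by rewrite -[map_mx phi v]mulmx1 -h1 mulmxA h0 mul0mx.
move/matrixP => /(_ 0 i); rewrite !mxE hi rmorph1 => /eqP.
by rewrite oner_eq0.
Qed.

Lemma res_fac (A : nzRingType) (L : unitRingType)
    (phi : {rmorphism {poly A} -> L}) (c : {poly A}) (G G' : {poly {poly A}}) :
  ~ (('X - c%:P) * G = 0 /\ ('X - c%:P) * G' = 0) ->
  DetStar_eq0 phi (sylvester (('X - c%:P) * G) (('X - c%:P) * G')).
Proof.
move=> nz.
set P := ('X - c%:P) * G; set Q := ('X - c%:P) * G'.
have hN : (0 < (size P).-1 + (size Q).-1)%N.
  have sP : P != 0 -> (1 < size P)%N.
    move=> hP; have hG : G != 0 by apply/eqP => hG0; move/eqP: hP; apply; rewrite /P hG0 mulr0.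
    by rewrite /P size_monicM ?monicXsubC // size_XsubC; rewrite -size_poly_gt0 in hG; case: (size _) hG.
  have sQ : Q != 0 -> (1 < size Q)%N.
    move=> hP; have hG : G' != 0 by apply/eqP => hG0; move/eqP: hP; apply; rewrite /Q hG0 mulr0.
    by rewrite /Q size_monicM ?monicXsubC // size_XsubC; rewrite -size_poly_gt0 in hG; case: (size _) hG.
  have [hP|hP] := eqVneq P 0.
    have [hQ|hQ] := eqVneq Q 0; first by exfalso; apply: nz.
    have := sQ hQ; lia.
  have := sP hP; lia.
have hv := @syl_null _ c G G'.
have hi : (\row_(i < (size P).-1 + (size Q).-1) c ^+ i) 0 (Ordinal hN) = 1.
  by rewrite mxE expr0.
exact: (@not_inv _ _ phi _ _ _ _ hv hi).
Qed.

Theorem proposition4p7 (R : realType) (L : unitRingType)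
    (phi : {rmorphism {poly H R} -> L}) :
  skew_field_of_quotients phi ->
  forall (P Q : {poly {poly H R}}) (a b : H R),
    ~ (P = 0 /\ Q = 0) ->
    ((exists P1 Q1 : {poly {poly H R}},
        P = q1_minus a * P1 /\ Q = q1_minus a * Q1) -> Res_q1_eq0 phi P Q) /\
    ((exists P2 Q2 : {poly {poly H R}},
        P = q2_minus b * P2 /\ Q = q2_minus b * Q2) -> Res_q2_eq0 phi P Q).
Proof.
move=> _ P Q a b nz; split.
  move=> [P1 [Q1 [hP hQ]]]; rewrite /Res_q1_eq0 hP hQ.
  by apply: res_fac; rewrite -hP -hQ.
move=> [P2 [Q2 [hP hQ]]]; rewrite /Res_q2_eq0 hP hQ.
have e : swapXY (q2_minus b) = 'X - (b%:P)%:P.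
  by rewrite /q2_minus swapXY_polyC rmorphB /= map_polyX map_polyC.
have E1 : swapXY (q2_minus b * P2) = ('X - (b%:P)%:P) * swapXY P2 by rewrite rmorphM; congr (_ * _); exact: e.
have E2 : swapXY (q2_minus b * Q2) = ('X - (b%:P)%:P) * swapXY Q2 by rewrite rmorphM; congr (_ * _); exact: e.
rewrite E1 E2; apply: (@res_fac _ _ phi (b%:P) (swapXY P2) (swapXY Q2)).
rewrite -E1 -E2 -hP -hQ => -[/eqP h1 /eqP h2]; apply: nz.
by split; apply/eqP; rewrite -swapXY_eq0.
Qed.
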